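(* Let $\Delta$ and $\Delta'$ be fat triangles, and let $S(\Delta)$, $S(\Delta')$ be sets of canonical chords (one per vertex) of $\Delta$ and $\Delta'$ respectively, with $P(\Delta)$ the set of endpoints of the chords in $S(\Delta)$. If $\Delta$ intersects $\Delta'$, then at least one of the following holds: (i) $\Delta$ contains a vertex of $\Delta'$; (ii) a point from $P(\Delta)$ lies inside $\Delta'$; (iii) a canonical chord from $S(\Delta)$ intersects a canonical chord from $S(\Delta')$.
   Context: Fix an absolute constant $\alpha>0$; a triangle is fat if its minimum angle is at least $\alpha$. Let $A:=\{i\cdot(\alpha/2): 0\le i\le\lfloor 4\pi/\alpha\rfloor\}$ be the set of canonical directions (angles). A canonical segment is a segment whose direction is in $A$. A canonical chord of a fat triangle $\Delta$ is a canonical segment connecting a vertex of $\Delta$ to the opposite side of $\Delta$ (each vertex of a fat triangle admits one). $S(\Delta)$ is a set of three canonical chords of $\Delta$, one per vertex, and $P(\Delta)$ is the set of endpoints of these chords (which includes the vertices of $\Delta$). *)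

(* Defs.v *)
From Stdlib Require Export Reals.
Open Scope R_scope.

Definition point := (R * R)%type.

Definition vsub (p q : point) : point := (fst p - fst q, snd p - snd q).
Definition dot (u v : point) : R := fst u * fst v + snd u * snd v.
Definition norm (u : point) : R := sqrt (dot u u).
Definition cross (u v : point) : R := fst u * snd v - snd u * fst v.

Definition angle_at (a b c : point) : R :=
  acos (dot (vsub b a) (vsub c a) / (norm (vsub b a) * norm (vsub c a))).

Record ptriangle := Tri { tA : point; tB : point; tC : point }.

Definition nondegenerate (t : ptriangle) : Prop :=
  cross (vsub (tB t) (tA t)) (vsub (tC t) (tA t)) <> 0.

Definition vertices (t : ptriangle) : list point := tA t :: tB t :: tC t :: nil.

Definition in_triangle (t : ptriangle) (p : point) : Prop :=
  exists l1 l2 l3 : R, 0 <= l1 /\ 0 <= l2 /\ 0 <= l3 /\ l1 + l2 + l3 = 1 /\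
    fst p = l1 * fst (tA t) + l2 * fst (tB t) + l3 * fst (tC t) /\
    snd p = l1 * snd (tA t) + l2 * snd (tB t) + l3 * snd (tC t).

Definition on_segment (p q x : point) : Prop :=
  exists s : R, 0 <= s <= 1 /\
    fst x = fst p + s * (fst q - fst p) /\ snd x = snd p + s * (snd q - snd p).

Definition fat (alpha : R) (t : ptriangle) : Prop :=
  nondegenerate t /\
  alpha <= angle_at (tA t) (tB t) (tC t) /\
  alpha <= angle_at (tB t) (tC t) (tA t) /\
  alpha <= angle_at (tC t) (tA t) (tB t).

Definition canonical_angle (alpha theta : R) : Prop :=
  exists i : nat, INR i <= 4 * PI / alpha /\ theta = INR i * (alpha / 2).

Definition canonical_segment (alpha : R) (p q : point) : Prop :=
  exists theta r : R, canonical_angle alpha theta /\ 0 < r /\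
    ((vsub q p = (r * cos theta, r * sin theta)) \/
     (vsub p q = (r * cos theta, r * sin theta))).

Definition canonical_chord_from (alpha : R) (v b c e : point) : Prop :=
  on_segment b c e /\ canonical_segment alpha v e.

(* A chord system S(t): endpoints e1, e2, e3 of the canonical chords
   from tA, tB, tC respectively. *)
Definition chord_system (alpha : R) (t : ptriangle) (e : point * point * point) : Prop :=
  let '(e1, e2, e3) := e in
  canonical_chord_from alpha (tA t) (tB t) (tC t) e1 /\
  canonical_chord_from alpha (tB t) (tC t) (tA t) e2 /\
  canonical_chord_from alpha (tC t) (tA t) (tB t) e3.

Definition chords (t : ptriangle) (e : point * point * point) : list (point * point) :=
  let '(e1, e2, e3) := e in (tA t, e1) :: (tB t, e2) :: (tC t, e3) :: nil.

Definition chord_points (t : ptriangle) (e : point * point * point) : list point :=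
  let '(e1, e2, e3) := e in tA t :: tB t :: tC t :: e1 :: e2 :: e3 :: nil.

Definition segments_intersect (s1 s2 : point * point) : Prop :=
  exists x, on_segment (fst s1) (snd s1) x /\ on_segment (fst s2) (snd s2) x.

(* Main.v *)
Require Import Defs.
From Stdlib Require Import Reals List Lra Psatz Classical.
Open Scope R_scope.

Lemma zprop (a b s0 : R) : 0 <= s0 -> 0 <= a + s0*b ->
  let z := (if Rlt_dec a 0 then - a / b else 0) in
  0 <= z <= s0 /\ (a < 0 -> 0 < z /\ a + z*b = 0) /\
  (forall s, z <= s <= s0 -> 0 <= a + s*b).
Proof.
  intros H0 H1 z. unfold z. destruct (Rlt_dec a 0) as [Ha|Ha].
  - assert (Hb : 0 < b) by nra.
    assert (E : - a / b * b = - a) by (field; lra).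
    assert (Hz0 : 0 < - a / b) by (apply Rdiv_lt_0_compat; lra).
    split; [split|split].
    + lra.
    + apply (Rmult_le_reg_r b); nra.
    + intros _; split; lra.
    + intros s [Hs1 Hs2]. nra.
  - split; [split|split]; try lra.
    intros s [Hs1 Hs2]. destruct (Rle_dec 0 b); nra.
Qed.

Lemma zprop' (a b s0 : R) : 0 <= s0 -> 0 <= a + s0*b ->
  exists z, 0 <= z <= s0 /\ (a < 0 -> 0 < z /\ a + z*b = 0) /\ (0 <= a -> z = 0) /\
  (forall s, z <= s <= s0 -> 0 <= a + s*b).
Proof.
  intros H0 H1. destruct (zprop a b s0 H0 H1) as [A [B C]].
  eexists; split; [exact A|split; [exact B|split; [|exact C]]].
  intros Ha. destruct (Rlt_dec a 0); lra.
Qed.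

Lemma hit3 (a1 b1 a2 b2 a3 b3 s0 : R) :
  0 <= s0 ->
  0 <= a1 + s0*b1 -> 0 <= a2 + s0*b2 -> 0 <= a3 + s0*b3 ->
  (a1 < 0 \/ a2 < 0 \/ a3 < 0) ->
  exists s, 0 <= s <= s0 /\ 0 <= a1 + s*b1 /\ 0 <= a2 + s*b2 /\ 0 <= a3 + s*b3 /\
   ((a1 < 0 /\ a1 + s*b1 = 0) \/ (a2 < 0 /\ a2 + s*b2 = 0) \/ (a3 < 0 /\ a3 + s*b3 = 0)).
Proof.
  intros H0 H1 H2 H3 Hneg.
  destruct (zprop' a1 b1 s0 H0 H1) as [z1 [Z1a [Z1c [Z1e Z1d]]]].
  destruct (zprop' a2 b2 s0 H0 H2) as [z2 [Z2a [Z2c [Z2e Z2d]]]].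
  destruct (zprop' a3 b3 s0 H0 H3) as [z3 [Z3a [Z3c [Z3e Z3d]]]].
  assert (HM : exists m, z1 <= m /\ z2 <= m /\ z3 <= m /\ (m = z1 \/ m = z2 \/ m = z3)).
  { destruct (Rle_dec z1 z2), (Rle_dec z2 z3), (Rle_dec z1 z3).
    all: first [ exists z1; repeat split; [lra|lra|lra|auto]
               | exists z2; repeat split; [lra|lra|lra|auto]
               | exists z3; repeat split; [lra|lra|lra|auto]]. }
  destruct HM as [m [M1 [M2 [M3 HM]]]].
  assert (Mle : m <= s0) by (destruct HM as [E|[E|E]]; lra).
  assert (Mpos : 0 < m).
  { destruct Hneg as [N|[N|N]].
    - destruct (Z1c N); lra.
    - destruct (Z2c N); lra.
    - destruct (Z3c N); lra. }
  exists m.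
  split; [lra|]. split; [apply Z1d; lra|]. split; [apply Z2d; lra|].
  split; [apply Z3d; lra|].
  destruct HM as [E|[E|E]]; subst m.
  - left. destruct (Rlt_dec a1 0) as [N|N].
    + destruct (Z1c N); split; auto.
    + exfalso. rewrite Z1e in Mpos; lra.
  - right; left. destruct (Rlt_dec a2 0) as [N|N].
    + destruct (Z2c N); split; auto.
    + exfalso. rewrite Z2e in Mpos; lra.
  - right; right. destruct (Rlt_dec a3 0) as [N|N].
    + destruct (Z3c N); split; auto.
    + exfalso. rewrite Z3e in Mpos; lra.
Qed.

Definition Dt t := cross (vsub (tB t) (tA t)) (vsub (tC t) (tA t)).
Definition l2 t P := cross (vsub P (tA t)) (vsub (tC t) (tA t)) / Dt t.
Definition l3 t P := cross (vsub (tB t) (tA t)) (vsub P (tA t)) / Dt t.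
Definition l1 t P := 1 - l2 t P - l3 t P.

Lemma lsum t P : l1 t P + l2 t P + l3 t P = 1.
Proof. unfold l1; ring. Qed.

Lemma recon_f t P : nondegenerate t ->
  fst P = l1 t P * fst (tA t) + l2 t P * fst (tB t) + l3 t P * fst (tC t).
Proof. intros H. unfold nondegenerate in H. unfold l1, l2, l3, Dt in *.
  unfold cross, vsub in *; simpl in *. field. exact H. Qed.

Lemma recon_s t P : nondegenerate t ->
  snd P = l1 t P * snd (tA t) + l2 t P * snd (tB t) + l3 t P * snd (tC t).
Proof. intros H. unfold nondegenerate in H. unfold l1, l2, l3, Dt in *.
  unfold cross, vsub in *; simpl in *. field. exact H. Qed.

Lemma in_tri_iff t P : nondegenerate t ->
  (in_triangle t P <-> 0 <= l1 t P /\ 0 <= l2 t P /\ 0 <= l3 t P).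
Proof.
  intros H. split.
  - intros [m1 [m2 [m3 [H1 [H2 [H3 [H4 [H5 H6]]]]]]]].
    assert (E2 : l2 t P = m2).
    { unfold nondegenerate in H. unfold l2, Dt in *. unfold cross, vsub in *; simpl in *.
      rewrite H5, H6. replace m1 with (1 - m2 - m3) by lra. field. exact H. }
    assert (E3 : l3 t P = m3).
    { unfold nondegenerate in H. unfold l3, Dt in *. unfold cross, vsub in *; simpl in *.
      rewrite H5, H6. replace m1 with (1 - m2 - m3) by lra. field. exact H. }
    unfold l1. rewrite E2, E3. lra.
  - intros [H1 [H2 H3]]. exists (l1 t P), (l2 t P), (l3 t P).
    repeat split; auto. apply lsum. apply recon_f; auto. apply recon_s; auto.
Qed.

Lemma l2_aff t p q Z s : nondegenerate t ->
  fst Z = fst p + s * (fst q - fst p) -> snd Z = snd p + s * (snd q - snd p) ->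
  l2 t Z = l2 t p + s * (l2 t q - l2 t p).
Proof. intros H E1 E2. unfold nondegenerate in H. unfold l2, Dt in *.
  unfold cross, vsub in *; simpl in *. rewrite E1, E2. field. exact H. Qed.

Lemma l3_aff t p q Z s : nondegenerate t ->
  fst Z = fst p + s * (fst q - fst p) -> snd Z = snd p + s * (snd q - snd p) ->
  l3 t Z = l3 t p + s * (l3 t q - l3 t p).
Proof. intros H E1 E2. unfold nondegenerate in H. unfold l3, Dt in *.
  unfold cross, vsub in *; simpl in *. rewrite E1, E2. field. exact H. Qed.

Lemma l1_aff t p q Z s : nondegenerate t ->
  fst Z = fst p + s * (fst q - fst p) -> snd Z = snd p + s * (snd q - snd p) ->
  l1 t Z = l1 t p + s * (l1 t q - l1 t p).
Proof. intros H E1 E2. unfold l1. rewrite (l2_aff t p q Z s), (l3_aff t p q Z s); auto. ring. Qed.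

Lemma core (p q Vk Vi Vj e : point) (a b xj xk yi yk : R) :
  0 <= a <= 1 -> 0 <= b <= 1 -> 0 <= xj -> 0 <= xk -> xj + xk = 1 ->
  0 <= yi -> 0 <= yk -> yi + yk = 1 ->
  fst p + a * (fst q - fst p) = xj * fst Vj + xk * fst Vk ->
  snd p + a * (snd q - snd p) = xj * snd Vj + xk * snd Vk ->
  fst p + b * (fst q - fst p) = yi * fst Vi + yk * fst Vk ->
  snd p + b * (snd q - snd p) = yi * snd Vi + yk * snd Vk ->
  (on_segment Vi Vj e \/ on_segment Vj Vi e) ->
  segments_intersect (p, q) (Vk, e).
Proof.
  intros Ha Hb Hxj Hxk Hx Hyi Hyk Hy HX1 HX2 HY1 HY2 He.
  assert (Hu : exists u, 0 <= u <= 1 /\ fst e = u * fst Vi + (1 - u) * fst Vj /\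
                                          snd e = u * snd Vi + (1 - u) * snd Vj).
  { destruct He as [[s [Hs [E1 E2]]]|[s [Hs [E1 E2]]]].
    - exists (1 - s). split; [lra|]. rewrite E1, E2. split; ring.
    - exists s. split; [lra|]. rewrite E1, E2. split; ring. }
  destruct Hu as [u [Hu [E1 E2]]].
  unfold segments_intersect, on_segment; simpl.
  replace xk with (1 - xj) in * by lra. replace yk with (1 - yi) in * by lra.
  destruct (Req_dec (yi * (1 - u) + xj * u) 0) as [D0|D0].
  - assert (A1 : yi * (1 - u) = 0) by nra.
    assert (A2 : xj * u = 0) by nra.
    destruct (Req_dec yi 0) as [Y0|Y0].
    + subst yi. exists Vk. split.
      * exists b. split; [lra|]. split; lra.
      * exists 0. split; [lra|]. split; ring.
    + assert (u = 1) by (apply Rmult_integral in A1; destruct A1; lra).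
      subst u. assert (xj = 0) by lra. subst xj.
      exists Vk. split.
      * exists a. split; [lra|]. split; lra.
      * exists 0. split; [lra|]. split; ring.
  - set (D := yi * (1 - u) + xj * u) in *.
    assert (Dp : 0 < D) by (unfold D in *; nra).
    set (t := xj * u / D).
    assert (HtD : t * D = xj * u) by (unfold t; field; lra).
    assert (Ht0 : 0 <= t) by nra.
    assert (Ht1 : t <= 1) by (unfold D in *; nra).
    exists (fst p + (a + t * (b - a)) * (fst q - fst p), snd p + (a + t * (b - a)) * (snd q - snd p)).
    split.
    + exists (a + t * (b - a)). split; [nra|]. simpl. split; ring.
    + exists (t * yi + (1 - t) * xj). split; [nra|]. simpl.
      rewrite E1, E2.
      replace (fst p + (a + t * (b - a)) * (fst q - fst p)) with
        ((1 - t) * (fst p + a * (fst q - fst p)) + t * (fst p + b * (fst q - fst p))) by ring.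
      replace (snd p + (a + t * (b - a)) * (snd q - snd p)) with
        ((1 - t) * (snd p + a * (snd q - snd p)) + t * (snd p + b * (snd q - snd p))) by ring.
      rewrite HX1, HX2, HY1, HY2. unfold t, D in *. split; field; lra.
Qed.

Lemma neg3 t P : nondegenerate t -> ~ in_triangle t P ->
  l1 t P < 0 \/ l2 t P < 0 \/ l3 t P < 0.
Proof.
  intros H N. rewrite (in_tri_iff t P H) in N.
  destruct (Rlt_dec (l1 t P) 0); auto.
  destruct (Rlt_dec (l2 t P) 0); auto.
  destruct (Rlt_dec (l3 t P) 0); auto.
  exfalso; apply N; lra.
Qed.

Lemma segL alpha t E p q : nondegenerate t -> chord_system alpha t E ->
  ~ in_triangle t p -> ~ in_triangle t q ->
  (exists P, on_segment p q P /\ in_triangle t P) ->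
  exists c, In c (chords t E) /\ segments_intersect (p, q) c.
Proof.
  intros Hnd HE Hp Hq [P [[s0 [Hs0 [F1 F2]]] HinP]].
  destruct E as [[e1 e2] e3]. destruct HE as [[Ho1 _] [[Ho2 _] [Ho3 _]]].
  rewrite (in_tri_iff t P Hnd) in HinP.
  rewrite (l1_aff t p q P s0 Hnd F1 F2), (l2_aff t p q P s0 Hnd F1 F2),
    (l3_aff t p q P s0 Hnd F1 F2) in HinP.
  destruct HinP as [I1 [I2 I3]].
  assert (Np := neg3 t p Hnd Hp). assert (Nq := neg3 t q Hnd Hq).
  destruct (hit3 (l1 t p) (l1 t q - l1 t p) (l2 t p) (l2 t q - l2 t p)
             (l3 t p) (l3 t q - l3 t p) s0) as [a [Ha [Ja1 [Ja2 [Ja3 Ja]]]]];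
    try lra; auto.
  destruct (hit3 (l1 t q) (- (l1 t q - l1 t p)) (l2 t q) (- (l2 t q - l2 t p))
             (l3 t q) (- (l3 t q - l3 t p)) (1 - s0)) as [s' [Hs' [Jb1 [Jb2 [Jb3 Jb]]]]];
    try lra; auto.
  set (b := 1 - s').
  set (X := (fst p + a * (fst q - fst p), snd p + a * (snd q - snd p))).
  set (Y := (fst p + b * (fst q - fst p), snd p + b * (snd q - snd p))).
  assert (Ax1 := l1_aff t p q X a Hnd eq_refl eq_refl).
  assert (Ax2 := l2_aff t p q X a Hnd eq_refl eq_refl).
  assert (Ax3 := l3_aff t p q X a Hnd eq_refl eq_refl).
  assert (Ay1 := l1_aff t p q Y b Hnd eq_refl eq_refl).
  assert (Ay2 := l2_aff t p q Y b Hnd eq_refl eq_refl).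
  assert (Ay3 := l3_aff t p q Y b Hnd eq_refl eq_refl).
  assert (RXf := recon_f t X Hnd). assert (RXs := recon_s t X Hnd).
  assert (RYf := recon_f t Y Hnd). assert (RYs := recon_s t Y Hnd).
  assert (SX := lsum t X). assert (SY := lsum t Y).
  set (x1 := l1 t X) in *. set (x2 := l2 t X) in *. set (x3 := l3 t X) in *.
  set (y1 := l1 t Y) in *. set (y2 := l2 t Y) in *. set (y3 := l3 t Y) in *.
  unfold b in *.
  clearbody x1 x2 x3 y1 y2 y3.
  unfold X, Y in RXf, RXs, RYf, RYs. simpl in RXf, RXs, RYf, RYs.
  destruct Ja as [[Na Za]|[[Na Za]|[Na Za]]];
  destruct Jb as [[Nb Zb]|[[Nb Zb]|[Nb Zb]]].
  - exfalso. destruct (Req_dec a 0); [subst; lra|nra].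
  - assert (Z1 : x1 = 0) by lra. assert (Z2 : y2 = 0) by lra.
    rewrite Z1 in RXf, RXs. rewrite Z2 in RYf, RYs.
    exists (tC t, e3). split; [simpl; tauto|].
    apply (core p q (tC t) (tA t) (tB t) e3 a (1 - s') x2 x3 y1 y3); try lra; auto.
  - assert (Z1 : x1 = 0) by lra. assert (Z2 : y3 = 0) by lra.
    rewrite Z1 in RXf, RXs. rewrite Z2 in RYf, RYs.
    exists (tB t, e2). split; [simpl; tauto|].
    apply (core p q (tB t) (tA t) (tC t) e2 a (1 - s') x3 x2 y1 y2); try lra; auto.
  - assert (Z1 : x2 = 0) by lra. assert (Z2 : y1 = 0) by lra.
    rewrite Z1 in RXf, RXs. rewrite Z2 in RYf, RYs.
    exists (tC t, e3). split; [simpl; tauto|].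
    apply (core p q (tC t) (tB t) (tA t) e3 a (1 - s') x1 x3 y2 y3); try lra; auto.
  - exfalso. destruct (Req_dec a 0); [subst; lra|nra].
  - assert (Z1 : x2 = 0) by lra. assert (Z2 : y3 = 0) by lra.
    rewrite Z1 in RXf, RXs. rewrite Z2 in RYf, RYs.
    exists (tA t, e1). split; [simpl; tauto|].
    apply (core p q (tA t) (tB t) (tC t) e1 a (1 - s') x3 x1 y2 y1); try lra; auto.
  - assert (Z1 : x3 = 0) by lra. assert (Z2 : y1 = 0) by lra.
    rewrite Z1 in RXf, RXs. rewrite Z2 in RYf, RYs.
    exists (tB t, e2). split; [simpl; tauto|].
    apply (core p q (tB t) (tC t) (tA t) e2 a (1 - s') x1 x2 y3 y2); try lra; auto.
  - assert (Z1 : x3 = 0) by lra. assert (Z2 : y2 = 0) by lra.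
    rewrite Z1 in RXf, RXs. rewrite Z2 in RYf, RYs.
    exists (tA t, e1). split; [simpl; tauto|].
    apply (core p q (tA t) (tC t) (tB t) e1 a (1 - s') x2 x1 y3 y1); try lra; auto.
  - exfalso. destruct (Req_dec a 0); [subst; lra|nra].
Qed.

Lemma edgeB t x y : nondegenerate t -> in_triangle t x -> ~ in_triangle t y ->
  exists Q, on_segment y x Q /\
    (on_segment (tA t) (tB t) Q \/ on_segment (tB t) (tC t) Q \/ on_segment (tC t) (tA t) Q).
Proof.
  intros Hnd Hx Hy.
  rewrite (in_tri_iff t x Hnd) in Hx. destruct Hx as [I1 [I2 I3]].
  assert (Np := neg3 t y Hnd Hy).
  destruct (hit3 (l1 t y) (l1 t x - l1 t y) (l2 t y) (l2 t x - l2 t y)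
             (l3 t y) (l3 t x - l3 t y) 1) as [a [Ha [Ja1 [Ja2 [Ja3 Ja]]]]];
    try lra; auto.
  set (X := (fst y + a * (fst x - fst y), snd y + a * (snd x - snd y))).
  assert (Ax1 := l1_aff t y x X a Hnd eq_refl eq_refl).
  assert (Ax2 := l2_aff t y x X a Hnd eq_refl eq_refl).
  assert (Ax3 := l3_aff t y x X a Hnd eq_refl eq_refl).
  assert (RXf := recon_f t X Hnd). assert (RXs := recon_s t X Hnd).
  assert (SX := lsum t X).
  set (x1 := l1 t X) in *. set (x2 := l2 t X) in *. set (x3 := l3 t X) in *.
  clearbody x1 x2 x3.
  exists X. split.
  { exists a. split; [lra|]. split; reflexivity. }
  unfold X in RXf, RXs |- *. simpl in RXf, RXs.
  destruct Ja as [[Na Za]|[[Na Za]|[Na Za]]].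
  - assert (Z : x1 = 0) by lra. rewrite Z in RXf, RXs.
    replace x2 with (1 - x3) in RXf, RXs by lra.
    right; left. exists x3. split; [lra|]. simpl. split; lra.
  - assert (Z : x2 = 0) by lra. rewrite Z in RXf, RXs.
    replace x3 with (1 - x1) in RXf, RXs by lra.
    right; right. exists x1. split; [lra|]. simpl. split; lra.
  - assert (Z : x3 = 0) by lra. rewrite Z in RXf, RXs.
    replace x1 with (1 - x2) in RXf, RXs by lra.
    left. exists x2. split; [lra|]. simpl. split; lra.
Qed.

Lemma tri_convex t X Y P : in_triangle t X -> in_triangle t Y -> on_segment X Y P ->
  in_triangle t P.
Proof.
  intros [a1 [a2 [a3 [A1 [A2 [A3 [A4 [A5 A6]]]]]]]]
         [b1 [b2 [b3 [B1 [B2 [B3 [B4 [B5 B6]]]]]]]] [s [Hs [E1 E2]]].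
  exists ((1 - s) * a1 + s * b1), ((1 - s) * a2 + s * b2), ((1 - s) * a3 + s * b3).
  repeat split; try nra.
  all: try (rewrite E1, A5, B5; ring).
  all: try (rewrite E2, A6, B6; ring).
Qed.

Lemma vA_in t : in_triangle t (tA t).
Proof. exists 1, 0, 0. repeat split; try lra; ring. Qed.

Lemma edgeAB t Q : on_segment (tA t) (tB t) Q -> in_triangle t Q.
Proof. intros [s [Hs [E1 E2]]]. exists (1 - s), s, 0. repeat split; try lra.
  all: try (rewrite E1; ring); try (rewrite E2; ring). Qed.
Lemma edgeBC t Q : on_segment (tB t) (tC t) Q -> in_triangle t Q.
Proof. intros [s [Hs [E1 E2]]]. exists 0, (1 - s), s. repeat split; try lra.
  all: try (rewrite E1; ring); try (rewrite E2; ring). Qed.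
Lemma edgeCA t Q : on_segment (tC t) (tA t) Q -> in_triangle t Q.
Proof. intros [s [Hs [E1 E2]]]. exists s, 0, (1 - s). repeat split; try lra.
  all: try (rewrite E1; ring); try (rewrite E2; ring). Qed.

Lemma step2 alpha T T' E E' V1 V2 Q :
  nondegenerate T -> nondegenerate T' ->
  chord_system alpha T E -> chord_system alpha T' E' ->
  ~ in_triangle T V1 -> ~ in_triangle T V2 ->
  (forall R, on_segment V1 V2 R -> in_triangle T' R) ->
  on_segment V1 V2 Q -> in_triangle T Q ->
  (forall p, In p (chord_points T E) -> ~ in_triangle T' p) ->
  exists s s', In s (chords T E) /\ In s' (chords T' E') /\ segments_intersect s s'.
Proof.
  intros N N' HE HE' H1 H2 HR HQ HQT NP.
  destruct (segL alpha T E V1 V2 N HE H1 H2) as [c [Hc [R [HR1 HR2]]]].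
  { exists Q; auto. }
  assert (Hends : ~ in_triangle T' (fst c) /\ ~ in_triangle T' (snd c)).
  { destruct E as [[e1 e2] e3]. simpl in Hc.
    destruct Hc as [<-|[<-|[<-|[]]]]; simpl; split; apply NP; simpl; tauto. }
  destruct Hends as [Hf Hs].
  destruct (segL alpha T' E' (fst c) (snd c) N' HE' Hf Hs) as [c' [Hc' Hi]].
  { exists R. split; [|apply HR; exact HR1]. destruct c; exact HR2. }
  exists c, c'. split; [auto|split; auto]; destruct c; exact Hi.
Qed.

Theorem mainTheorem10 (alpha : R) (T T' : ptriangle) (E E' : point * point * point) :
  0 < alpha ->
  fat alpha T -> fat alpha T' ->
  chord_system alpha T E -> chord_system alpha T' E' ->
  (exists x, in_triangle T x /\ in_triangle T' x) ->
  (exists v, In v (vertices T') /\ in_triangle T v) \/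
  (exists p, In p (chord_points T E) /\ in_triangle T' p) \/
  (exists s s', In s (chords T E) /\ In s' (chords T' E') /\ segments_intersect s s').
Proof.
  intros Ha [N _] [N' _] HE HE' [x [Hx Hx']].
  destruct (classic (exists v, In v (vertices T') /\ in_triangle T v)) as [H|NV];
    [left; exact H|].
  destruct (classic (exists p, In p (chord_points T E) /\ in_triangle T' p)) as [H|NP];
    [right; left; exact H|].
  right; right.
  assert (NV' : forall v, In v (vertices T') -> ~ in_triangle T v)
    by (intros v Hv Hin; apply NV; eauto).
  assert (NP' : forall p, In p (chord_points T E) -> ~ in_triangle T' p)
    by (intros p Hp Hin; apply NP; eauto).
  assert (HA : ~ in_triangle T' (tA T)).
  { apply NP'. destruct E as [[e1 e2] e3]. simpl; tauto. }
  destruct (edgeB T' x (tA T) N' Hx' HA) as [Q [HQ HE3]].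
  assert (HQT : in_triangle T Q) by (apply (tri_convex T (tA T) x Q); auto; apply vA_in).
  destruct HE3 as [H3|[H3|H3]].
  - apply (step2 alpha T T' E E' (tA T') (tB T') Q); auto;
      try (apply NV'; simpl; tauto). apply edgeAB.
  - apply (step2 alpha T T' E E' (tB T') (tC T') Q); auto;
      try (apply NV'; simpl; tauto). apply edgeBC.
  - apply (step2 alpha T T' E E' (tC T') (tA T') Q); auto;
      try (apply NV'; simpl; tauto). apply edgeCA.
Qed.
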